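(* Let $A$ and $B$ be real $n\times n$ matrices, and suppose there exists a real $n\times n$ matrix $X$ such that $AB-BA\geq I-X$ (entrywise). Then: (i) $\operatorname{tr}(X)\geq n$; (ii) $r(X)\geq1$, and consequently $\|X\|\geq1$ for the operator norm induced by any norm on $\mathbb R^n$; (iii) if $X$ is idempotent ($X^2=X$), then $X=I$.
   Context: Real $n\times n$ matrices are ordered entrywise: $X\leq Y$ means $x_{ij}\leq y_{ij}$ for all $i,j$. $I$ is the $n\times n$ identity matrix, $\operatorname{tr}$ the trace, and $r(X)$ the spectral radius of $X$ (maximum modulus of its complex eigenvalues). *)

(* Defs.v *)
From HB Require Import structures.
From mathcomp Require Import all_boot all_order all_algebra.
From mathcomp Require Import classical_sets reals.
From mathcomp.real_closed Require Import complex.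
Set Implicit Arguments. Unset Strict Implicit. Unset Printing Implicit Defensive.
Import Order.TTheory GRing.Theory Num.Theory.
Local Open Scope ring_scope.
Local Open Scope classical_set_scope.

Definition cmod (R : rcfType) (z : R[i]) : R :=
  Num.sqrt (complex.Re z ^+ 2 + complex.Im z ^+ 2).

Definition complex_eigenvalue (R : rcfType) (n : nat) (X : 'M[R]_n) (l : R[i]) : Prop :=
  eigenvalue (map_mx (fun x : R => (x%:C)%C) X) l.

Definition spectral_radius (R : realType) (n : nat) (X : 'M[R]_n) : R :=
  sup [set cmod l | l in [set l | complex_eigenvalue X l]].

Definition is_vnorm (R : realType) (n : nat) (N : 'cV[R]_n -> R) : Prop :=
  [/\ forall v, 0 <= N v,
      forall v, N v = 0 -> v = 0,
      forall (a : R) v, N (a *: v) = `|a| * N v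
    & forall u v, N (u + v) <= N u + N v].

Definition opnorm (R : realType) (n : nat) (N : 'cV[R]_n -> R) (X : 'M[R]_n) : R :=
  sup [set N (X *m v) | v in [set v | N v <= 1]].

(* Main.v *)
Require Import Defs.
From HB Require Import structures.
From mathcomp Require Import all_boot all_order all_algebra.
From mathcomp Require Import classical_sets reals.
From mathcomp.real_closed Require Import complex.
From mathcomp Require Import boolp topology normedtype derive.
From mathcomp Require Import lra ring.
Import Order.TTheory GRing.Theory Num.Theory.
Import numFieldNormedType.Exports.
Local Open Scope ring_scope.
Section S.
Variable R : rcfType.
Lemma ReM (x : R) (z : R[i]) : complex.Re ((x%:C)%C * z) = x * complex.Re z.
Proof. by case: z => a b /=; rewrite mul0r subr0. Qed.
Lemma ImM (x : R) (z : R[i]) : complex.Im ((x%:C)%C * z) = x * complex.Im z.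
Proof. by case: z => a b /=; rewrite mul0r addr0. Qed.
Lemma Re_sum I (r : seq I) P (F : I -> R[i]) : complex.Re (\sum_(i <- r | P i) F i) = \sum_(i <- r | P i) complex.Re (F i).
Proof. elim/big_rec2: _ => // i y1 y2 _ <-; by case: (F i); case: y2. Qed.
Lemma Im_sum I (r : seq I) P (F : I -> R[i]) : complex.Im (\sum_(i <- r | P i) F i) = \sum_(i <- r | P i) complex.Im (F i).
Proof. elim/big_rec2: _ => // i y1 y2 _ <-; by case: (F i); case: y2. Qed.
Lemma Re_mx n m p (X : 'M[R]_(n,m)) (w : 'M[R[i]]_(m,p)) :
  map_mx (@complex.Re R) (map_mx (fun x : R => (x%:C)%C) X *m w) = X *m map_mx (@complex.Re R) w.
Proof. apply/matrixP => i j; rewrite !mxE Re_sum; apply: eq_bigr => k _; by rewrite !mxE ReM. Qed.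
Lemma Im_mx n m p (X : 'M[R]_(n,m)) (w : 'M[R[i]]_(m,p)) :
  map_mx (@complex.Im R) (map_mx (fun x : R => (x%:C)%C) X *m w) = X *m map_mx (@complex.Im R) w.
Proof. apply/matrixP => i j; rewrite !mxE Im_sum; apply: eq_bigr => k _; by rewrite !mxE ImM. Qed.
Lemma tr_toC n (X : 'M[R]_n) : \tr (map_mx (fun x : R => (x%:C)%C) X) = ((\tr X)%:C)%C.
Proof. exact: (trace_map_mx (real_complex R)). Qed.
Lemma toC_mul n m p (X : 'M[R]_(n,m)) (Y : 'M[R]_(m,p)) :
  map_mx (fun x : R => (x%:C)%C) (X *m Y) = map_mx (fun x : R => (x%:C)%C) X *m map_mx (fun x : R => (x%:C)%C) Y.
Proof. exact: (map_mxM (real_complex R)). Qed.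
Lemma sum_lt_size (T : eqType) (s : seq T) (f : T -> R) :
  (forall x, x \in s -> f x < 1) -> s != [::] -> \sum_(x <- s) f x < (size s)%:R.
Proof.
elim: s => [//|x s IH] H _; rewrite big_cons /= -addn1 natrD addrC.
have Hx : f x < 1 by apply: H; rewrite mem_head.
case: s IH H => [|y s] IH H; first by rewrite big_nil add0r /= mulr0n add0r.
apply: ltrD => //; apply: IH => // z zin; apply: H; by rewrite in_cons zin orbT.
Qed.
End S.
Lemma char_roots (C : closedFieldType) n (A : 'M[C]_n.+1) :
  exists rs : seq C, [/\ size rs = n.+1, \sum_(r <- rs) r = \tr A &
     forall l, eigenvalue A l <-> l \in rs].
Proof.
have [rs Hp] := closed_field_poly_normal (char_poly A).
rewrite (monicP (char_poly_monic A)) scale1r in Hp.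
have Hs : size rs = n.+1.
  have := size_char_poly A; rewrite Hp size_prod_XsubC; by case.
exists rs; split => //.
- apply: oppr_inj; rewrite -char_poly_trace // -coefPn_prod_XsubC ?Hs //.
  by rewrite Hp.
- by move=> l; rewrite eigenvalue_root_char Hp root_prod_XsubC.
Qed.
Lemma big_eig (R : rcfType) n (Y : 'M[R]_n.+1) : (n.+1)%:R <= \tr Y ->
  exists l, eigenvalue (map_mx (fun x : R => (x%:C)%C) Y) l /\ 1 <= complex.Re l.
Proof.
move=> Htr; have [rs [Hs Hsum Heig]] := @char_roots (R[i] : closedFieldType) _ (map_mx (fun x : R => (x%:C)%C) Y).
have HR : \sum_(r <- rs) complex.Re r = \tr Y.
  by rewrite -Re_sum Hsum tr_toC.
case: (boolP (has (fun r => 1 <= complex.Re r) rs)) => [/hasP [r rin H] | /hasPn H].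
  by exists r; split => //; apply/Heig.
have : \sum_(r <- rs) complex.Re r < (size rs)%:R.
  apply: sum_lt_size; last by rewrite -size_eq0 Hs.
  by move=> x /H; rewrite -ltNge.
by rewrite HR Hs ltNge Htr.
Qed.
Lemma sum_le_size (R : rcfType) (T : eqType) (s : seq T) (f : T -> R) :
  (forall x, x \in s -> f x <= 1) -> \sum_(x <- s) f x <= (size s)%:R.
Proof.
elim: s => [|x s IH] H; first by rewrite big_nil.
rewrite big_cons /= -addn1 natrD addrC; apply: lerD.
  by apply: IH => z zin; apply: H; rewrite in_cons zin orbT.
by apply: H; rewrite mem_head.
Qed.
Lemma sum_lt_size2 (R : rcfType) (T : eqType) (s : seq T) (f : T -> R) x0 :
  (forall x, x \in s -> f x <= 1) -> x0 \in s -> f x0 < 1 ->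
  \sum_(x <- s) f x < (size s)%:R.
Proof.
elim: s => [//|x s IH] H; rewrite in_cons => /orP [/eqP -> | x0in] Hx0;
  rewrite big_cons /= -addn1 natrD addrC.
  apply: ler_ltD => //; apply: sum_le_size => z zin; apply: H; by rewrite in_cons zin orbT.
apply: ltr_leD; last by apply: H; rewrite mem_head.
by apply: IH => // z zin; apply: H; rewrite in_cons zin orbT.
Qed.
Lemma idem_one (R : rcfType) n (X : 'M[R]_n.+1) : (n.+1)%:R <= \tr X -> X *m X = X -> X = 1%:M.
Proof.
move=> Htr HX.
set Xc := map_mx (fun x : R => (x%:C)%C) X.
have HXc : Xc *m Xc = Xc by rewrite -toC_mul HX.
have [rs [Hs Hsum Heig]] := @char_roots (R[i] : closedFieldType) _ Xc.
have HR : \sum_(r <- rs) complex.Re r = \tr X.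
  by rewrite -Re_sum Hsum tr_toC.
have H01 : forall r, r \in rs -> r = 0 \/ r = 1.
  move=> r /Heig /eigenvalueP [v Hv v0].
  have : (r ^+ 2 - r) *: v = 0.
    have E : v *m Xc *m Xc = r^+2 *: v by rewrite Hv -scalemxAl Hv scalerA expr2.
    have E2 : v *m Xc *m Xc = r *: v by rewrite -mulmxA HXc Hv.
    by rewrite scalerBl -E E2 subrr.
  move/eqP; rewrite scaler_eq0 (negbTE v0) orbF subr_eq0 expr2.
  case: (eqVneq r 0) => [-> _| r0]; first by left.
  move=> /eqP E; right; apply: (mulfI r0); by rewrite E mulr1.
have H0 : ~ eigenvalue Xc 0.
  move=> /Heig r0.
  have : \sum_(r <- rs) complex.Re r < (size rs)%:R.
    apply: (@sum_lt_size2 _ _ _ _ 0 _ r0) => //= x /H01 [->|->] //=.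
  by rewrite HR Hs ltNge Htr.
apply/eqP; case: (eqVneq X 1%:M) => // Xn1; exfalso; apply: H0.
have HD : (1%:M - X) *m X = 0 by rewrite mulmxBl mul1mx HX subrr.
have : 1%:M - X != 0 by rewrite subr_eq0 eq_sym.
case/matrix0Pn => i [j Hij].
apply/eigenvalueP; exists (map_mx (fun x : R => (x%:C)%C) (row i (1%:M - X))).
  by rewrite scale0r -toC_mul -row_mul HD; apply/matrixP => a b; rewrite !mxE.
apply/negP => /eqP /matrixP /(_ 0 j); rewrite !mxE => /eqP.
move: Hij; rewrite !mxE => /negP H; rewrite eq_complex /= eqxx andbT => E; exact: H E.
Qed.
Lemma cmod_ge1 (R : rcfType) (l : R[i]) : 1 <= complex.Re l -> 1 <= cmod l.
Proof.
move=> H; rewrite /cmod -sqrtr1; apply: ler_wsqrtr.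
have := sqr_ge0 (complex.Im l); rewrite !expr2 => ?; nra.
Qed.
Lemma cmod_ge0 (R : rcfType) (l : R[i]) : 0 <= cmod l.
Proof. exact: sqrtr_ge0. Qed.
Lemma spec_ge1 (R : realType) n (X : 'M[R]_n.+1) : (n.+1)%:R <= \tr X -> 1 <= spectral_radius X.
Proof.
move=> Htr; have [l [Hl Hl1]] := @big_eig R _ _ Htr.
have [rs [_ _ Heig]] := @char_roots (R[i] : closedFieldType) _ (map_mx (fun x : R => (x%:C)%C) X).
have Hs : has_sup [set cmod l | l in [set l | complex_eigenvalue X l]].
  split; first by exists (cmod l); exists l.
  exists (\sum_(r <- rs) cmod r) => _ [x /= Hx <-].
  have xin : x \in rs by apply/Heig.
  rewrite (big_rem x xin) /= lerDl; apply: sumr_ge0 => *; exact: cmod_ge0.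
have H1 := @cmod_ge1 R l Hl1. have H2 : cmod l <= spectral_radius X by apply: sup_upper_bound => //; exists l. exact: le_trans H1 H2.
Qed.
Local Open Scope classical_set_scope.
Set Implicit Arguments. Unset Strict Implicit.

Section Norms.
Variables (R : realType) (n : nat) (N : 'cV[R]_n -> R).
Hypothesis HN : is_vnorm N.

Lemma N0 : N 0 = 0.
Proof. case: HN => _ _ Hs _. by rewrite -(scale0r (0 : 'cV[R]_n)) Hs normr0 mul0r. Qed.
Lemma Nge0 v : 0 <= N v. Proof. by case: HN. Qed.
Lemma NN v : N (- v) = N v.
Proof. case: HN => _ _ Hs _. by rewrite -scaleN1r Hs normrN1 mul1r. Qed.
Lemma NZ a v : N (a *: v) = `|a| * N v. Proof. by case: HN. Qed.
Lemma ND u v : N (u + v) <= N u + N v. Proof. by case: HN. Qed.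
Lemma Neq0 v : N v = 0 -> v = 0. Proof. case: HN => _ H _ _; exact: H. Qed.
Lemma Nsum k (F : 'I_k -> 'cV[R]_n) : N (\sum_i F i) <= \sum_i N (F i).
Proof.
apply: (big_ind2 (fun a b => N a <= b)) => [|a1 a2 b1 b2 Ha Hb|i _]//.
- by rewrite N0.
- by apply: le_trans (ND _ _) _; apply: lerD.
Qed.
Lemma mul_col m k (X : 'M[R]_(m, k)) (v : 'cV[R]_k) : X *m v = \sum_j v j 0 *: col j X.
Proof.
apply/matrixP => i c; rewrite !mxE summxE; apply: eq_bigr => j _.
by rewrite !mxE (ord1 c) mulrC.
Qed.
Lemma N_mul k (X : 'M[R]_(n, k)) (v : 'cV[R]_k) :
  N (X *m v) <= \sum_j `|v j 0| * N (col j X).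
Proof.
rewrite mul_col; apply: (le_trans (Nsum (fun j => v j 0 *: col j X))); apply: ler_sum => j _; by rewrite NZ.
Qed.
Lemma N_le (v : 'cV[R]_n) : N v <= \sum_j `|v j 0| * N (col j 1%:M).
Proof. by rewrite -{1}[v]mul1mx N_mul. Qed.
Lemma entry_le (t : 'rV[R]_n) j : `|t 0 j| <= `|t|.
Proof.
have /mapP[ij Hj ->] : `|t 0 j| \in [seq `|t x.1 x.2| | x : 'I_1 * 'I_n].
  by apply/mapP; exists (ord0, j) => //=; rewrite mem_enum.
by rewrite [leRHS]/Num.norm /= mx_normrE; apply/bigmax_geP; right => /=; exists ij.
Qed.
Definition KN := \sum_j N (col j (1%:M : 'M[R]_n)).
Lemma N_le2 (t : 'rV[R]_n) : N t^T <= `|t| * KN.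
Proof.
apply: le_trans (N_le _) _; rewrite /KN mulr_sumr; apply: ler_sum => j _.
by rewrite mxE; apply: ler_wpM2r; [exact: Nge0 | exact: entry_le].
Qed.
Lemma nbhs_R (a d : R) : 0 < d -> nbhs a [set r | `|a - r| < d].
Proof. move=> d0. have := nbhsx_ballx a d d0. by rewrite -ball_normE. Qed.
Lemma N_cont : continuous (fun t : 'rV[R]_n => N t^T).
Proof.
move=> x; apply/cvgrPdist_lt; first exact: nbhs_filter.
move=> e e0.
have K0 : 0 < KN + 1 by rewrite ltr_wpDl // sumr_ge0 // => *; exact: Nge0.
set d := e / (KN + 1).
have d0 : 0 < d by rewrite divr_gt0.
exists (fun i0 j => [set r | `|x i0 j - r| < d]).
  by move=> i0 j; apply: nbhs_R.
move=> y /= Hy.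
have H1 : `|N x^T - N y^T| <= N (x - y)^T.
  have A : N x^T <= N y^T + N (x - y)^T.
    by apply: le_trans (ND _ _); rewrite -linearD /= addrC subrK.
  have B : N y^T <= N x^T + N (x - y)^T.
    rewrite -[N (x - y)^T]NN -linearN; apply: le_trans (ND _ _); by rewrite -linearD /= opprB addrC subrK.
  rewrite ler_norml; apply/andP; split; lra.
apply: le_lt_trans H1 _; apply: le_lt_trans (N_le _) _.
apply: (@le_lt_trans _ _ (d * KN)).
  rewrite /KN mulr_sumr; apply: ler_sum => j _; rewrite !mxE.
  by apply: ler_wpM2r; [exact: Nge0 | apply: ltW; apply: Hy].
rewrite /d mulrAC ltr_pdivrMr // ltr_pM2l //; lra.
Qed.
Lemma N_lower : (0 < n)%N -> exists2 c, 0 < c & forall (v : 'cV[R]_n) j, `|v j 0| <= c * N v.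
Proof.
move=> n0.
pose A := [set t : 'rV[R]_n | `|t| = 1].
have A0 : A !=set0.
  pose v := const_mx 1 : 'rV[R]_n.
  have v0 : v != 0.
    apply/negP => /eqP /matrixP /(_ 0 (Ordinal n0)); rewrite !mxE => /eqP.
    by rewrite oner_eq0.
  exists (`|v|^-1 *: v); rewrite /A /= normrZ normfV normr_id mulVf //.
  by rewrite normr_eq0.
have cA : compact A.
  have Hb : [bounded x | x in A].
    rewrite /bounded_near; near=> M => t /= ->.
    by near: M; exact: nbhs_pinfty_ge.
  apply: bounded_closed_compact; first exact: Hb.
  rewrite /A -[X in closed X]/(Num.norm @^-1` [set 1]).
  apply: preimage_closed; last exact: closed_eq.
  by move=> x _; exact: norm_continuous.
have [c cA' Hc] := compact_EVT_min A0 cA (continuous_subspaceT N_cont).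
move: cA'; rewrite inE /A /= => Hc1.
have c0 : 0 < N c^T.
  rewrite lt_def Nge0 andbT; apply/negP => /eqP /Neq0 /eqP.
  rewrite trmx_eq0 => /eqP E; move: Hc1; rewrite E normr0 => /eqP.
  by rewrite eq_sym oner_eq0.
exists (N c^T)^-1; first by rewrite invr_gt0.
move=> v j.
have [->|vn0] := eqVneq v 0; first by rewrite N0 mxE normr0 mulr0.
set s := `|v^T|.
have s0 : 0 < s by rewrite normr_gt0 trmx_eq0.
have tA : (s^-1 *: v^T) \in A.
  by rewrite inE /A /= normrZ normfV normr_id mulVf // gt_eqF.
have := Hc _ tA; rewrite linearZ /= trmxK NZ normfV normr_id => H.
have Hj : `|v j 0| <= s by have := entry_le v^T j; rewrite mxE.
rewrite mulrC ler_pdivlMr //; apply: le_trans (ler_wpM2r (ltW c0) Hj) _.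
by rewrite mulrC -ler_pdivlMr // mulrC.
Unshelve. all: by end_near.
Qed.
End Norms.

Section Op.
Variables (R : realType) (n : nat) (N : 'cV[R]_n -> R) (X : 'M[R]_n).
Hypothesis HN : is_vnorm N.
Hypothesis n0 : (0 < n)%N.

Lemma op_has_sup : has_sup [set N (X *m v) | v in [set v | N v <= 1]].
Proof.
split; first by exists (N (X *m 0)); exists 0 => //=; rewrite N0.
have [c c0 Hc] := N_lower HN n0.
exists (\sum_j c * N (col j X)) => _ [v /= Hv <-].
apply: le_trans (N_mul HN _ _) _; apply: ler_sum => j _.
apply: ler_wpM2r; first exact: Nge0.
apply: le_trans (Hc v j) _; by rewrite -[leRHS]mulr1 ler_wpM2l // ltW.
Qed.

Lemma op_ge0 : 0 <= opnorm N X.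
Proof.
apply: le_trans (sup_upper_bound op_has_sup _); last by exists 0 => //=; rewrite N0.
by rewrite mulmx0 N0.
Qed.

Lemma op_le v : N (X *m v) <= opnorm N X * N v.
Proof.
have [/(Neq0 HN) ->|Nv0] := eqVneq (N v) 0; first by rewrite mulmx0 !N0 ?mulr0.
have Nv : 0 < N v by rewrite lt_def Nv0 Nge0.
have H : N (X *m ((N v)^-1 *: v)) <= opnorm N X.
  apply: sup_upper_bound; first exact: op_has_sup.
  exists ((N v)^-1 *: v) => //=; by rewrite NZ // normfV ger0_norm ?mulVf // ltW.
have H' : (N v)^-1 * N (X *m v) <= opnorm N X.
  by move: H; rewrite -scalemxAr NZ // normfV ger0_norm // ltW.
rewrite -[N (X *m v)]mul1r -(mulfV Nv0) -mulrA mulrC.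
by apply: ler_wpM2r => //; apply: ltW.
Qed.

Lemma rot (u v : 'cV[R]_n) (a b : R) : X *m u = a *: u - b *: v ->
  X *m v = b *: u + a *: v -> (u != 0 \/ v != 0) ->
  Num.sqrt (a ^+ 2 + b ^+ 2) <= opnorm N X.
Proof.
move=> Hu Hv uv0.
set q := opnorm N X; set m := Num.sqrt (a ^+ 2 + b ^+ 2).
pose Y p r := p *: u + r *: v.
have hXY p r : X *m Y p r = Y (p * a + r * b) (r * a - p * b).
  rewrite /Y mulmxDr -!scalemxAr Hu Hv; apply/matrixP => i j; rewrite !mxE; ring.
pose U := [set pr : R * R | pr.1 ^+ 2 + pr.2 ^+ 2 = 1].
pose S := [set N (Y pr.1 pr.2) | pr in U].
have U10 : U (1, 0) by rewrite /U /= expr1n expr0n addr0.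
have U01 : U (0, 1) by rewrite /U /= expr1n expr0n add0r.
have hS : has_sup S.
  split; first by exists (N (Y 1 0)); exists (1, 0).
  exists (N u + N v) => _ [[p r] /= Hpr <-].
  have := sqr_ge0 (p - 1); have := sqr_ge0 (p + 1); have := sqr_ge0 (r - 1);
  have := sqr_ge0 (r + 1); have := sqr_ge0 r; have := sqr_ge0 p.
  rewrite /U /= !expr2 in Hpr * => ? ? ? ? ? ?.
  have Hp : `|p| <= 1 by rewrite ler_norml; apply/andP; split; nra.
  have Hr : `|r| <= 1 by rewrite ler_norml; apply/andP; split; nra.
  apply: le_trans (ND HN _ _) _; rewrite !NZ //.
  apply: lerD; rewrite -[leRHS]mul1r; apply: ler_wpM2r => //; exact: Nge0.
set M := sup S.
have Mu : N u <= M.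
  apply: sup_upper_bound => //; exists (1, 0) => //=; by rewrite /Y scale1r scale0r addr0.
have Mv : N v <= M.
  apply: sup_upper_bound => //; exists (0, 1) => //=; by rewrite /Y scale1r scale0r add0r.
have M0 : 0 < M.
  case: uv0 => [u0|v0].
    apply: lt_le_trans Mu; rewrite lt_def (Nge0 HN) andbT; apply/negP => /eqP /(Neq0 HN) /eqP.
    by rewrite (negbTE u0).
  apply: lt_le_trans Mv; rewrite lt_def (Nge0 HN) andbT; apply/negP => /eqP /(Neq0 HN) /eqP.
  by rewrite (negbTE v0).
have hab : 0 <= a ^+ 2 + b ^+ 2 by rewrite addr_ge0 // sqr_ge0.
have hm : a * a + b * b = m * m by rewrite -!expr2 sqr_sqrtr.
have [m0|m0] := eqVneq m 0; first by rewrite m0 op_ge0.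
have m0' : 0 < m by rewrite lt_def m0 sqrtr_ge0.
set mi := m^-1.
have key p' r' : U (p', r') -> m * N (Y p' r') <= q * M.
  rewrite /U /= => Hpr'.
  set p := (a * p' - b * r') * mi; set r := (b * p' + a * r') * mi.
  have hU : U (p, r).
    rewrite /U /=.
    have -> : p ^+ 2 + r ^+ 2 = mi * mi * (a * a + b * b) * (p' ^+ 2 + r' ^+ 2)
      by rewrite /p /r; ring.
    by rewrite Hpr' hm /mi; field.
  have e1 : p * a + r * b = m * p'.
    have -> : p * a + r * b = mi * (a * a + b * b) * p' by rewrite /p /r; ring.
    by rewrite hm /mi; field.
  have e2 : r * a - p * b = m * r'.
    have -> : r * a - p * b = mi * (a * a + b * b) * r' by rewrite /p /r; ring.
    by rewrite hm /mi; field.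
  have E : N (X *m Y p r) = m * N (Y p' r').
    rewrite hXY e1 e2 /Y -!scalerA -scalerDr NZ // ger0_norm // ltW //.
  rewrite -E; apply: le_trans (op_le _) _; apply: ler_wpM2l; first exact: op_ge0.
  by apply: sup_upper_bound => //; exists (p, r).
have HM : M <= q * M / m.
  apply: ge_sup; first by exists (N (Y 1 0)); exists (1, 0).
  move=> _ [[p r] /= Hpr <-].
  by rewrite ler_pdivlMr // mulrC; apply: key.
move: HM; rewrite ler_pdivlMr // [q * M]mulrC ler_pM2l //.
Qed.
End Op.

Lemma ReMc (R : rcfType) (l z : R[i]) :
  complex.Re (l * z) = complex.Re l * complex.Re z - complex.Im l * complex.Im z.
Proof. by case: l => a b; case: z. Qed.
Lemma ImMc (R : rcfType) (l z : R[i]) :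
  complex.Im (l * z) = complex.Re l * complex.Im z + complex.Im l * complex.Re z.
Proof. by case: l => a b; case: z. Qed.

Lemma op_ge1 (R : realType) n (X : 'M[R]_n.+1) (N : 'cV[R]_n.+1 -> R) :
  is_vnorm N -> (n.+1)%:R <= \tr X -> 1 <= opnorm N X.
Proof.
move=> HN Htr.
have Htr' : (n.+1)%:R <= \tr X^T by rewrite mxtrace_tr.
have [l [Hl Hl1]] := @big_eig R _ _ Htr'.
move/eigenvalueP: Hl => [w Hw w0].
set Xc := map_mx (fun x : R => (x%:C)%C) X.
have HW : Xc *m w^T = l *: w^T.
  by have := congr1 trmx Hw; rewrite trmx_mul map_trmx trmxK linearZ.
set u := map_mx (@complex.Re R) w^T; set v := map_mx (@complex.Im R) w^T.
have Hu : X *m u = complex.Re l *: u - complex.Im l *: v.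
  rewrite /u -Re_mx HW; apply/matrixP => i j; rewrite !mxE.
  by rewrite ReMc.
have Hv : X *m v = complex.Im l *: u + complex.Re l *: v.
  rewrite /v -Im_mx HW; apply/matrixP => i j; rewrite !mxE.
  by rewrite ImMc addrC.
have uv0 : u != 0 \/ v != 0.
  case: (eqVneq u 0) => [u0|]; last by left.
  case: (eqVneq v 0) => [v0|]; last by right.
  exfalso; move/negP: w0; apply; apply/eqP/matrixP => i j.
  move/matrixP: u0 => /(_ j i); move/matrixP: v0 => /(_ j i); rewrite !mxE.
  by case: (w i j) => c d /= -> ->.
have := rot HN (isT : (0 < n.+1)%N) Hu Hv uv0.
apply: le_trans; exact: (@cmod_ge1 R l Hl1).
Qed.

Theorem proposition4p4 (R : realType) (n : nat) (A B X : 'M[R]_n.+1) :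
  (forall i j, (1%:M - X) i j <= (A *m B - B *m A) i j) ->
  [/\ (n.+1)%:R <= \tr X,
      1 <= spectral_radius X,
      (forall N : 'cV[R]_n.+1 -> R, is_vnorm N -> 1 <= opnorm N X)
    & (X *m X = X -> X = 1%:M)].
Proof.
move=> H.
have Htr : (n.+1)%:R <= \tr X.
  have : \tr (1%:M - X) <= \tr (A *m B - B *m A) by apply: ler_sum => i _; apply: H.
  by rewrite !linearB /= mxtrace1 mxtrace_mulC subrr subr_le0.
split => //.
- exact: spec_ge1.
- by move=> N HN; apply: op_ge1.
- exact: idem_one.
Qed.
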